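(* For every $n$-qubit pure state $\ket\psi=\sum_{x\in\mathbb F_2^n}c_x\ket x$, $$32^n\sum_{x\in\mathbb F_2^{2n}}\widehat{p_\psi}(x)^3\ \ge\ |c_{0}|^{12},$$ where $c_0$ is the amplitude of $\ket{0^n}$.
   Context: For $x=(a,b)\in\mathbb F_2^{2n}$ with $a,b\in\mathbb F_2^n$, the Weyl operator is $W_x=i^{a\cdot b}X^{a_1}Z^{b_1}\otimes\cdots\otimes X^{a_n}Z^{b_n}$, where $a\cdot b=\sum_j a_jb_j\in\mathbb Z$. The characteristic distribution is $p_\psi(x)=2^{-n}|\braket{\psi|W_x|\psi}|^2$. For $f:\mathbb F_2^{2n}\to\mathbb R$ the Fourier coefficients are $\widehat f(x)=4^{-n}\sum_{y\in\mathbb F_2^{2n}}f(y)(-1)^{x\cdot y}$ (dot product mod 2). *)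

(* Defs.v *)
From mathcomp Require Import all_boot all_order all_algebra.
Set Implicit Arguments. Unset Strict Implicit. Unset Printing Implicit Defensive.
Import Order.TTheory GRing.Theory Num.Theory.
Local Open Scope ring_scope.

Definition bits (n : nat) := {ffun 'I_n -> 'I_2}.

(* Integer dot product a . b = sum_j a_j b_j (a natural number, not mod 2). *)
Definition dotn (n : nat) (a b : bits n) : nat := (\sum_(j < n) (a j : nat) * b j)%N.

Definition bits2 (n : nat) := (bits n * bits n)%type.

(* Standard (non-symplectic) dot product mod 2 on F_2^{2n}, returned as a parity bool. *)
Definition dot2 (n : nat) (x y : bits2 n) : bool :=
  odd (dotn x.1 y.1 + dotn x.2 y.2).

Section Qubits.
Variable C : numClosedFieldType.

Definition PauliX : 'M[C]_2 := \matrix_(i, j) (i != j)%:R.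
Definition PauliZ : 'M[C]_2 := \matrix_(i, j) ((i == j)%:R * (-1) ^+ (i : nat)).

(* Weyl operator W_(a,b) = i^{a.b} X^{a_1}Z^{b_1} (x) ... (x) X^{a_n}Z^{b_n},
   as a matrix indexed by computational basis states (tensor product entries
   are products of the factors' entries). *)
Definition weyl (n : nat) (x : bits2 n) (z y : bits n) : C :=
  'i ^+ (dotn x.1 x.2) *
  \prod_(j < n) ((PauliX ^+ (x.1 j : nat)) * (PauliZ ^+ (x.2 j : nat))) (z j) (y j).

Definition expect (n : nat) (psi : bits n -> C) (M : bits n -> bits n -> C) : C :=
  \sum_(z : bits n) \sum_(y : bits n) (psi z)^* * M z y * psi y.

Definition charDist (n : nat) (psi : bits n -> C) (x : bits2 n) : C :=
  (2 ^+ n)^-1 * `|expect psi (weyl x)| ^+ 2.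

Definition fourier (n : nat) (f : bits2 n -> C) (x : bits2 n) : C :=
  (4 ^+ n)^-1 * \sum_(y : bits2 n) f y * (-1) ^+ dot2 x y.

Definition is_state (n : nat) (psi : bits n -> C) : Prop :=
  \sum_(x : bits n) `|psi x| ^+ 2 = 1.

Definition zero_bits (n : nat) : bits n := [ffun=> ord0].

End Qubits.

(* Main.v *)
Require Import Defs.
From mathcomp Require Import all_boot all_order all_algebra ring.
Import Order.TTheory GRing.Theory Num.Theory.
Local Open Scope ring_scope.

Definition chi1 (C : numClosedFieldType) {n : nat} (a w : bits n) : C := (-1) ^+ dotn a w.

Lemma chi1E (C : numClosedFieldType) n (a w : bits n) :
  chi1 C a w = \prod_(j < n) (-1) ^+ ((a j : nat) * w j)%N.
Proof. by rewrite /chi1 /dotn (big_morph (fun k => (-1 : C) ^+ k) (@exprD _ _) (expr0 _)). Qed.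

Lemma chi1C (C : numClosedFieldType) n (a w : bits n) : chi1 C a w = chi1 C w a.
Proof. by rewrite !chi1E; apply: eq_bigr => j _; rewrite mulnC. Qed.

Lemma sgn2D (C : numClosedFieldType) (k u v : 'I_2) :
  (-1 : C) ^+ ((k : nat) * (u + v)%R)%N = (-1) ^+ ((k : nat) * u)%N * (-1) ^+ ((k : nat) * v)%N.
Proof.
case: k => [[|[|k]] ?] //=; case: u => [[|[|u]] ?] //=; case: v => [[|[|v]] ?] //=;
  rewrite ?mul0n ?mul1n ?expr0 ?expr1 ?mulr1 ?mul1r //.
by rewrite mulrNN mulr1.
Qed.

Lemma chi1D (C : numClosedFieldType) n (a w1 w2 : bits n) :
  chi1 C a (w1 + w2) = chi1 C a w1 * chi1 C a w2.
Proof.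
rewrite !chi1E -big_split /=; apply: eq_bigr => j _.
by rewrite ffunE sgn2D.
Qed.

Lemma bits_neq0 n (w : bits n) : w != 0 -> exists j, w j != 0.
Proof.
move=> hw; apply/existsP; rewrite -negb_forall; apply: contra hw => /forallP h.
by apply/eqP/ffunP => j; rewrite ffunE; apply/eqP/h.
Qed.

Lemma chi1S (C : numClosedFieldType) n (w : bits n) :
  \sum_(a : bits n) chi1 C a w = 2 ^+ n * (w == 0)%:R.
Proof.
under eq_bigr => a _ do rewrite chi1E.
rewrite -(bigA_distr_bigA (fun j (u : 'I_2) => (-1 : C) ^+ ((u : nat) * w j)%N)) /=.
have h2 : forall v : 'I_2, \sum_(u : 'I_2) (-1 : C) ^+ ((u : nat) * v)%N = 2 * (v == 0)%:R.
  move=> v; rewrite big_ord_recr big_ord1 /=.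
  by case: v => [[|[|v]] ?] //=; rewrite ?expr0 ?expr1 ?mulr1 ?mulr0 // addrN.
under eq_bigr => j _ do rewrite h2.
have [->|hw] := eqVneq w 0.
  rewrite mulr1; under eq_bigr => j _ do rewrite ffunE eqxx mulr1.
  by rewrite prodr_const card_ord.
have [j hj] := @bits_neq0 n w hw.
by rewrite (bigD1 j) //= (negbTE hj) mulr0 mul0r mulr0.
Qed.

Definition chi2 (C : numClosedFieldType) {n : nat} (x y : bits2 n) : C := (-1) ^+ dot2 x y.

Lemma chi2E (C : numClosedFieldType) n (x y : bits2 n) :
  chi2 C x y = chi1 C x.1 y.1 * chi1 C x.2 y.2.
Proof. by rewrite /chi2 /dot2 signr_odd exprD. Qed.

Lemma chi2D (C : numClosedFieldType) n (x y z : bits2 n) :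
  chi2 C x (y + z) = chi2 C x y * chi2 C x z.
Proof. rewrite !chi2E /= !chi1D; ring. Qed.

Lemma chi2S (C : numClosedFieldType) n (y : bits2 n) :
  \sum_(x : bits2 n) chi2 C x y = 4 ^+ n * (y == 0)%:R.
Proof.
under eq_bigr => x _ do rewrite chi2E.
rewrite -(pair_big predT predT (fun a b => chi1 C a y.1 * chi1 C b y.2)) /=.
rewrite -big_distrlr /= !chi1S.
case: y => y1 y2 /=.
have -> : (4 : C) = 2 * 2 by rewrite -natrM.
rewrite exprMn.
have -> : ((y1, y2) == 0) = (y1 == 0) && (y2 == 0) by [].
by case: (y1 == 0); case: (y2 == 0); rewrite /= ?mulr1 ?mulr0 ?mul0r.
Qed.

Lemma oppb n (a : bits n) : - a = a.
Proof.
apply/ffunP => j; rewrite ffunE.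
by case: (a j) => [[|[|u]] ?] //=; apply/val_inj.
Qed.

Lemma oppb2 n (a : bits2 n) : - a = a.
Proof. by case: a => a1 a2; rewrite (_ : -(a1,a2) = (-a1,-a2)) // !oppb. Qed.

Lemma addb_eq0 n (a b : bits n) : (a + b == 0) = (b == a).
Proof. by rewrite addr_eq0 oppb eq_sym. Qed.

Lemma addb2_eq0 n (a b : bits2 n) : (a + b == 0) = (b == a).
Proof. by rewrite addr_eq0 oppb2 eq_sym. Qed.

Lemma cubeA (C : numClosedFieldType) (G : finType) (add : G -> G -> G) (e : G)
  (chi : G -> G -> C) (N : C) (h : G -> C)
  (chiD : forall x y z, chi x (add y z) = chi x y * chi x z)
  (chiS : forall y, \sum_x chi x y = N * (y == e)%:R)
  (hc : forall a b, (add a b == e) = (b == a)) :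
  \sum_x (\sum_y h y * chi x y) ^+ 3 =
  N * \sum_y1 \sum_y2 h y1 * h y2 * h (add y1 y2).
Proof.
transitivity (\sum_x \sum_y1 \sum_y2 \sum_y3
   h y1 * h y2 * h y3 * chi x (add (add y1 y2) y3)).
  apply: eq_bigr => x _.
  rewrite exprS expr2 mulr_suml; apply: eq_bigr => y1 _.
  rewrite mulr_suml mulr_sumr; apply: eq_bigr => y2 _.
  rewrite !mulr_sumr; apply: eq_bigr => y3 _.
  rewrite !chiD; ring.
rewrite exchange_big mulr_sumr; apply: eq_bigr => y1 _.
rewrite exchange_big mulr_sumr; apply: eq_bigr => y2 _.
rewrite exchange_big /=.
under eq_bigr => y3 _ do rewrite -mulr_sumr chiS hc.
rewrite (bigD1 (add y1 y2)) //= eqxx big1 => [|y3 /negbTE -> ]; last by rewrite !mulr0.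
by rewrite addr0 mulr1 mulrC.
Qed.

Lemma pauliZ_entry (C : numClosedFieldType) (k u v : 'I_2) :
  ((PauliX C ^+ 0) * (PauliZ C ^+ k)) u v = (u == v)%:R * (-1) ^+ ((k : nat) * u)%N.
Proof.
rewrite expr0 mul1r.
case: k => [[|[|k]] ?] //=.
  by rewrite expr0 mxE mul0n expr0 mulr1.
by rewrite expr1 mxE mul1n.
Qed.

Lemma dotn0 n (b : bits n) : dotn 0 b = 0%N.
Proof. by rewrite /dotn big1 // => j _; rewrite ffunE. Qed.

Lemma weyl0 (C : numClosedFieldType) n (b z y : bits n) :
  weyl C (0, b) z y = (z == y)%:R * chi1 C b z.
Proof.
rewrite /weyl /= dotn0 expr0 mul1r.
under eq_bigr => j _ do rewrite ffunE pauliZ_entry.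
rewrite big_split /= -chi1E; congr (_ * _).
have [<-|hzy] := eqVneq z y.
  by rewrite big1 // => j _; rewrite eqxx.
have hzy' : z - y != 0 by rewrite subr_eq0.
have [j hj] := @bits_neq0 n _ hzy'.
rewrite (bigD1 j) //= ffunE in hj *.
have -> : (z j == y j) = false.
  apply/negbTE; apply: contra hj => /eqP e; by rewrite !ffunE e subrr.
by rewrite mul0r.
Qed.

Definition qz {C : numClosedFieldType} {n} (psi : {ffun bits n -> C}) (z : bits n) : C := `|psi z| ^+ 2.
Definition fz {C : numClosedFieldType} {n} (psi : {ffun bits n -> C}) (b : bits n) : C :=
  \sum_(z : bits n) qz psi z * chi1 C b z.

Lemma chi1_real (C : numClosedFieldType) n (a b : bits n) : chi1 C a b \is Num.real.
Proof. by rewrite /chi1 rpredX // rpredN rpred1. Qed.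

Lemma expect0 (C : numClosedFieldType) n (psi : {ffun bits n -> C}) (b : bits n) :
  expect psi (weyl C (0, b)) = fz psi b.
Proof.
rewrite /expect /fz; apply: eq_bigr => z _.
under eq_bigr => y _ do rewrite weyl0.
rewrite (bigD1 z) //= big1 => [|y hy]; last by rewrite eq_sym (negbTE hy) mul0r mulr0 mul0r.
by rewrite eqxx addr0 /qz normCK mul1r; ring.
Qed.

Lemma charDist0 (C : numClosedFieldType) n (psi : {ffun bits n -> C}) (b : bits n) :
  charDist psi (0, b) = (2 ^+ n)^-1 * fz psi b ^+ 2.
Proof.
rewrite /charDist expect0 real_normK //.
by apply: rpred_sum => z _; rewrite rpredM ?chi1_real // /qz rpredX // normr_real.
Qed.


Definition rz {C : numClosedFieldType} {n} (psi : {ffun bits n -> C}) (x : bits n) : C :=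
  \sum_(z : bits n) qz psi z * qz psi (z + x).

Lemma two_n_neq0 (C : numClosedFieldType) n : (2 : C) ^+ n != 0.
Proof. by rewrite expf_neq0 // pnatr_eq0. Qed.

Lemma hat_h (C : numClosedFieldType) n (psi : {ffun bits n -> C}) (x : bits n) :
  \sum_(b : bits n) charDist psi (0, b) * chi1 C x b = rz psi x.
Proof.
transitivity (\sum_(b : bits n) \sum_(z1 : bits n) \sum_(z2 : bits n)
   (2 ^+ n)^-1 * (qz psi z1 * qz psi z2) * chi1 C b ((z1 + x) + z2)).
  apply: eq_bigr => b _.
  rewrite charDist0 /fz expr2 big_distrlr /= mulr_sumr mulr_suml; apply: eq_bigr => z1 _.
  rewrite mulr_sumr mulr_suml; apply: eq_bigr => z2 _.
  rewrite !chi1D (chi1C C n x b); ring.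
rewrite exchange_big /rz; apply: eq_bigr => z1 _.
rewrite exchange_big /=.
under eq_bigr => z2 _ do rewrite -mulr_sumr chi1S addb_eq0.
rewrite (bigD1 (z1 + x)) //= eqxx big1 => [|z2 /negbTE ->]; last by rewrite !mulr0.
rewrite addr0 mulr1 mulrC mulrA mulfV ?two_n_neq0 //; by rewrite mul1r.
Qed.

Lemma qz_ge0 (C : numClosedFieldType) n (psi : {ffun bits n -> C}) z : 0 <= qz psi z.
Proof. by rewrite /qz exprn_ge0. Qed.

Lemma rz_ge0 (C : numClosedFieldType) n (psi : {ffun bits n -> C}) x : 0 <= rz psi x.
Proof. by apply: sumr_ge0 => z _; rewrite mulr_ge0 ?qz_ge0. Qed.

Lemma charDist_ge0 (C : numClosedFieldType) n (psi : {ffun bits n -> C}) x : 0 <= charDist psi x.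
Proof. by rewrite /charDist mulr_ge0 ?invr_ge0 ?exprn_ge0 ?ler0n. Qed.

Lemma restrict (C : numClosedFieldType) n (F : bits2 n -> C) :
  (forall y, 0 <= F y) -> \sum_(b : bits n) F (0, b) <= \sum_(y : bits2 n) F y.
Proof.
move=> hF.
have -> : \sum_(y : bits2 n) F y = \sum_(a : bits n) \sum_(b : bits n) F (a, b).
  by rewrite pair_bigA; apply: eq_bigr => -[a b].
rewrite [X in _ <= X](bigD1 (0 : bits n)) //=.
rewrite lerDl; apply: sumr_ge0 => a _; apply: sumr_ge0 => b _; exact: hF.
Qed.

Theorem claim3p4 (C : numClosedFieldType) (n : nat) (psi : {ffun bits n -> C})
  (hpsi : is_state psi) :
  `|psi (zero_bits n)| ^+ 12 <=
  32 ^+ n * \sum_(x : bits2 n) (fourier (charDist psi) x) ^+ 3.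
Proof.
set p := charDist psi.
set S := \sum_(y1 : bits2 n) \sum_(y2 : bits2 n) p y1 * p y2 * p (y1 + y2).
set t : C := 2 ^+ n.
have tn0 : t != 0 by exact: two_n_neq0.
have t0 : 0 <= t by rewrite exprn_ge0 ?ler0n.
have hA : \sum_(x : bits2 n) (fourier p x) ^+ 3 = ((4 ^+ n)^-1) ^+ 3 * (4 ^+ n * S).
  rewrite /fourier; under eq_bigr => x _ do rewrite exprMn.
  rewrite -mulr_sumr; congr (_ * _).
  exact: (@cubeA C (bits2 n) (fun a b => a + b) 0 (chi2 C) (4 ^+ n) p (@chi2D C n) (@chi2S C n) (@addb2_eq0 n)).
set Q := (qz psi 0 ^+ 2) ^+ 3.
have hQ : `|psi (zero_bits n)| ^+ 12 = Q.
  have -> : zero_bits n = 0 by apply/ffunP => j; rewrite !ffunE.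
  by rewrite /Q /qz -!exprM.
set h := fun b : bits n => p (0, b).
have hadd : forall b1 b2 : bits n, ((0, b1) + (0, b2) : bits2 n) = (0, b1 + b2).
  by move=> b1 b2; rewrite (_ : (0, b1) + (0, b2) = (0 + 0, b1 + b2)) // addr0.
have hp0 : forall y, 0 <= p y by move=> y; exact: charDist_ge0.
have hS0 : \sum_(b1 : bits n) \sum_(b2 : bits n) h b1 * h b2 * h (b1 + b2) <= S.
  have r1 := @restrict C n (fun y1 => \sum_(y2 : bits2 n) p y1 * p y2 * p (y1 + y2))
    (fun y => sumr_ge0 _ (fun y2 _ => mulr_ge0 (mulr_ge0 (hp0 y) (hp0 y2)) (hp0 _))).
  apply: le_trans r1.
  apply: ler_sum => b1 _.
  have r2 := @restrict C n (fun y2 => p (0, b1) * p y2 * p ((0, b1) + y2))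
    (fun y2 => mulr_ge0 (mulr_ge0 (hp0 _) (hp0 y2)) (hp0 _)).
  apply: le_trans r2.
  by apply: ler_sum => b2 _; rewrite /h hadd.
have hB : t * \sum_(b1 : bits n) \sum_(b2 : bits n) h b1 * h b2 * h (b1 + b2) =
          \sum_(x : bits n) rz psi x ^+ 3.
  rewrite -(@cubeA C (bits n) (fun a b => a + b) 0 (chi1 C) t h (@chi1D C n) (@chi1S C n) (@addb_eq0 n)).
  by apply: eq_bigr => x _; rewrite /h hat_h.
have hR : Q <= \sum_(x : bits n) rz psi x ^+ 3.
  rewrite (bigD1 (0 : bits n)) //= -[Q]addr0.
  apply: lerD; last by apply: sumr_ge0 => x _; rewrite exprn_ge0 ?rz_ge0.
  rewrite /Q; apply: lerXn2r; rewrite ?nnegrE.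
  - by rewrite exprn_ge0 // qz_ge0.
  - exact: rz_ge0.
  rewrite /rz (bigD1 (0 : bits n)) //= addr0 expr2 lerDl.
  by apply: sumr_ge0 => z _; rewrite mulr_ge0 ?qz_ge0.
have hS : t^-1 * Q <= S.
  apply: le_trans hS0.
  have e : \sum_(b1 : bits n) \sum_(b2 : bits n) h b1 * h b2 * h (b1 + b2) =
           t^-1 * \sum_(x : bits n) rz psi x ^+ 3 by rewrite -hB mulKf.
  rewrite e.
  by rewrite ler_wpM2l // invr_ge0.
rewrite hQ hA.
have h32 : (32 : C) = 2 ^+ 5 by rewrite -natrX.
have h4 : (4 : C) = 2 ^+ 2 by rewrite -natrX.
rewrite h32 h4 -!exprM mulnC exprM -/t mulnC exprM -/t.
have -> : t ^+ 5 * (t ^- 2 ^+ 3 * (t ^+ 2 * S)) = t * S.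
  by field.
rewrite -[Q](mulVKf tn0).
by rewrite ler_wpM2l.
Qed.
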